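(* Let $P\subseteq\mathbb{R}^n$ be a permutation-invariant polytope, $\phi:P\to\mathbb{R}$ a Schur-concave function on $P$, and $\alpha\in\mathbb{R}$. Let $M=\{x\in P\mid$ there is no $u\in P$ with $u\ge_m x$ and $u_\Delta\ne x_\Delta\}$, $S=\{(x,t)\mid\phi(x)\le t\le\alpha,\ x\in P\}$ and $X=\{(x,t)\mid\phi(x)\le t\le\alpha,\ x\in M\}$. Then $\mathrm{conv}(S)=\mathrm{conv}(X)$.
   Context: $P$ is permutation-invariant if $x\in P$ implies $Qx\in P$ for every permutation matrix $Q$. $\phi$ is Schur-concave on $P$ if for all $x,y\in P$, $x\ge_m y$ implies $\phi(x)\le\phi(y)$. $x_{[i]}$ is the $i$-th largest entry; $x\ge_m y$ means $\sum_{i=1}^j x_{[i]}\ge\sum_{i=1}^j y_{[i]}$ for $j<n$ with equality for $j=n$. For $x\in\mathbb{R}^n$, $x_\Delta\in\mathbb{R}^n$ is the vector $(x_{[1]},\dots,x_{[n]})$ (entries sorted nonincreasingly). *)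

(* Defs.v *)
From HB Require Import structures.
From mathcomp Require Import all_boot all_order all_algebra all_fingroup.
Set Implicit Arguments. Unset Strict Implicit. Unset Printing Implicit Defensive.
Import Order.TTheory GRing.Theory Num.Theory.
Local Open Scope ring_scope.

Section Defs.
Variable R : realFieldType.

Definition sortdesc n (x : 'rV[R]_n) : seq R :=
  sort (fun a b : R => b <= a) [seq x 0 i | i <- enum 'I_n].

(* x_[i] (0-based: x_[i+1] in the paper) *)
Definition xbr n (x : 'rV[R]_n) (i : nat) : R := nth 0 (sortdesc x) i.

Definition topsum n (x : 'rV[R]_n) (j : nat) : R := \sum_(i < j) xbr x i.

Definition majorizes n (x y : 'rV[R]_n) : Prop :=
  (forall j, (j < n)%N -> topsum y j <= topsum x j) /\ topsum x n = topsum y n.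

Definition conv (V : lmodType R) (A : V -> Prop) (z : V) : Prop :=
  exists (k : nat) (l : 'I_k -> R) (p : 'I_k -> V),
    (forall i, 0 <= l i) /\ \sum_(i < k) l i = 1 /\ (forall i, A (p i)) /\
    z = \sum_(i < k) l i *: p i.

Definition polytope n (P : 'rV[R]_n -> Prop) : Prop :=
  exists (k : nat) (v : 'I_k -> 'rV[R]_n),
    forall x, P x <-> conv (fun y => exists i, y = v i) x.

Definition perm_invariant n (P : 'rV[R]_n -> Prop) : Prop :=
  forall (s : 'S_n) x, P x -> P (x *m perm_mx s).

Definition schur_concave_on n (P : 'rV[R]_n -> Prop) (phi : 'rV[R]_n -> R) : Prop :=
  forall x y, P x -> P y -> majorizes x y -> phi x <= phi y.

Definition maj_maximal n (P : 'rV[R]_n -> Prop) (x : 'rV[R]_n) : Prop :=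
  P x /\ ~ (exists u, P u /\ majorizes u x /\ sortdesc u <> sortdesc x).

Definition pt n (x : 'rV[R]_n) (t : R) : 'rV[R]_(n + 1) := row_mx x (const_mx t).

Definition episet n (A : 'rV[R]_n -> Prop) (phi : 'rV[R]_n -> R) (alpha : R)
  (z : 'rV[R]_(n + 1)) : Prop :=
  exists x t, z = pt x t /\ A x /\ phi x <= t /\ t <= alpha.

End Defs.

(* Main.v *)
Require Import Defs.
From HB Require Import structures.
From mathcomp Require Import all_boot all_order all_algebra all_fingroup.
From mathcomp Require Import zify ring lra.
From Stdlib Require Import IndefiniteDescription.
Set Implicit Arguments. Unset Strict Implicit. Unset Printing Implicit Defensive.
Import Order.TTheory GRing.Theory Num.Theory.
Local Open Scope ring_scope.


Section Convex.
Variable R : realFieldType.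
Variable V : lmodType R.
Implicit Types (A B : V -> Prop).

Definition convF A (y : V) : Prop :=
  exists (T : finType) (l : T -> R) (p : T -> V),
    (forall i, 0 <= l i) /\ \sum_i l i = 1 /\ (forall i, A (p i)) /\
    y = \sum_i l i *: p i.

Lemma conv_convF A y : conv A y <-> convF A y.
Proof.
split.
  move=> [k [l [p [l0 [l1 [pA ->]]]]]].
  by exists 'I_k, l, p.
move=> [T [l [p [l0 [l1 [pA ->]]]]]].
exists #|T|, (fun i => l (enum_val i)), (fun i => p (enum_val i)).
split=> //; split.
  by rewrite -l1 -(big_enum_val (A := T)); apply: eq_bigl => i; rewrite inE.
split=> //.
by rewrite -(big_enum_val (A := T) (fun i => l i *: p i)); apply: eq_bigl => i; rewrite inE.
Qed.

Lemma convF_pt A y : A y -> convF A y.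
Proof.
move=> Ay; exists 'I_1, (fun _ => 1), (fun _ => y).
by do !split=> //; rewrite big_ord1 ?scale1r.
Qed.

Lemma convF_mono A B y : (forall a, A a -> B a) -> convF A y -> convF B y.
Proof.
move=> AB [T [l [p [l0 [l1 [pA ->]]]]]].
by exists T, l, p; do !split=> //; move=> i; apply: AB.
Qed.

Lemma convF_drop A (T : finType) (l : T -> R) (p : T -> V) :
  (forall i, 0 <= l i) -> \sum_i l i = 1 -> (forall i, l i != 0 -> A (p i)) ->
  convF A (\sum_i l i *: p i).
Proof.
move=> l0 l1 pA.
have [i0 li0] : exists i0, l i0 != 0.
  apply/existsP; apply: contraT; rewrite negb_exists => /forallP H.
  have : \sum_i l i = 0 by apply: big1 => i _; move: (H i); rewrite negbK => /eqP.
  by rewrite l1 => /eqP; rewrite oner_eq0.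
exists T, l, (fun i => if l i == 0 then p i0 else p i); split=> //; split=> //.
split; first by move=> i; case: eqP => [_|/eqP]; [apply: pA|apply: pA].
by apply: eq_bigr => i _; case: eqP => // ->; rewrite !scale0r.
Qed.

Lemma convF_trans A B y :
  (forall a, A a -> convF B a) -> convF A y -> convF B y.
Proof.
move=> AB [T [l [p [l0 [l1 [pA ->]]]]]].
have H : forall i, {Ti : finType & {li : Ti -> R & {qq : Ti -> V |
   (forall j, 0 <= li j) /\ \sum_j li j = 1 /\ (forall j, B (qq j)) /\
    p i = \sum_j li j *: qq j}}}.
  move=> i.
  have [Ti HT] := constructive_indefinite_description _ (AB _ (pA i)).
  have [li Hl] := constructive_indefinite_description _ HT.
  have [qq Hp] := constructive_indefinite_description _ Hl.
  by exists Ti, li, qq.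
pose Ti i := projT1 (H i).
pose li i : Ti i -> R := projT1 (projT2 (H i)).
pose qq i : Ti i -> V := proj1_sig (projT2 (projT2 (H i))).
have Hi i : (forall j, 0 <= li i j) /\ \sum_j li i j = 1 /\ (forall j, B (qq i j)) /\
    p i = \sum_j li i j *: qq i j := proj2_sig (projT2 (projT2 (H i))).
exists {i : T & Ti i}, (fun t => l (tag t) * li (tag t) (tagged t)),
  (fun t => qq (tag t) (tagged t)).
split; first by move=> [i j] /=; apply: mulr_ge0 => //; case: (Hi i).
split.
  rewrite -(sig_big_dep (fun _ => true) (fun _ _ => true)
    (fun i j => l i * li i j)) /= -l1.
  by apply: eq_bigr => i _; rewrite -mulr_sumr; case: (Hi i) => _ [-> _]; rewrite mulr1.
split; first by move=> [i j] /=; case: (Hi i) => _ [_ [+ _]]; apply.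
rewrite -(sig_big_dep (fun _ => true) (fun _ _ => true)
    (fun i j => (l i * li i j) *: qq i j)) /=.
apply: eq_bigr => i _; case: (Hi i) => _ [_ [_ ->]].
by rewrite scaler_sumr; apply: eq_bigr => j _; rewrite scalerA.
Qed.

End Convex.


Section Cut.
Variable R : realFieldType.
Variable V : lmodType R.

Definition affine (g : V -> R) := forall (T : finType) (l : T -> R) (p : T -> V),
  \sum_i l i = 1 -> g (\sum_i l i *: p i) = \sum_i l i * g (p i).

Variable g : V -> R.
Hypothesis gA : affine g.

Lemma affine2 a b v w : a + b = 1 -> g (a *: v + b *: w) = a * g v + b * g w.
Proof.
move=> ab.
have := @gA bool (fun i : bool => if i then a else b) (fun i : bool => if i then v else w).
by rewrite !big_bool /=; apply.
Qed.

Lemma convF_affine_ge (A : V -> Prop) c y :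
  (forall z, A z -> c <= g z) -> convF A y -> c <= g y.
Proof.
move=> H [T [l [p [l0 [l1 [pA ->]]]]]].
rewrite gA // -[c]mul1r -l1 mulr_suml; apply: ler_sum => i _.
by apply: ler_wpM2l => //; apply: H.
Qed.

Lemma convF_affine_le (A : V -> Prop) c y :
  (forall z, A z -> g z <= c) -> convF A y -> g y <= c.
Proof.
move=> H [T [l [p [l0 [l1 [pA ->]]]]]].
rewrite gA // -[c]mul1r -l1 mulr_suml; apply: ler_sum => i _.
by apply: ler_wpM2l => //; apply: H.
Qed.

Definition cross (v w : V) : V := (g v - g w)^-1 *: (g v *: w - g w *: v).

Definition cut (W : seq V) : seq V :=
  [seq w <- W | 0 <= g w] ++
  [seq cross v w | v <- [seq v <- W | 0 < g v], w <- [seq w <- W | g w < 0]].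

Lemma cut_gen W z : z \in cut W -> convF (fun x => x \in W) z /\ 0 <= g z.
Proof.
rewrite mem_cat => /orP [|].
  by rewrite mem_filter => /andP [gz zW]; split=> //; apply: convF_pt.
move=> /allpairsP [[v w] /= []]; rewrite !mem_filter => /andP [gv vW] /andP [gw wW] ->.
have d0 : g v - g w != 0 by apply: lt0r_neq0; lra.
have E : cross v w = (- g w / (g v - g w)) *: v + (g v / (g v - g w)) *: w.
  rewrite /cross scalerBr !scalerA addrC; congr (_ + _).
    by rewrite -scaleNr mulrC mulNr.
  by rewrite mulrC.
have S1 : - g w / (g v - g w) + g v / (g v - g w) = 1 by field.
split.
  rewrite E.
  have := convF_drop (A := fun x => x \in W) (l := fun i : bool => if i then - g w / (g v - g w) else g v / (g v - g w))
     (p := fun i : bool => if i then v else w).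
  rewrite !big_bool /=; apply.
  - by case; apply: divr_ge0; lra.
  - by [].
  - by case.
rewrite E affine2 //.
suff -> : - g w / (g v - g w) * g v + g v / (g v - g w) * g w = 0 by [].
field; done.
Qed.

End Cut.


Lemma double_sum_id (R : realFieldType) (U : lmodType R) (T : finType)
  (lP lN gp : T -> R) (x : T -> U) (A : R) :
  A != 0 -> \sum_i lP i * gp i = A ->
  \sum_i \sum_j (lP i * lN j / A) *: (gp i *: x j - gp j *: x i) =
  \sum_j lN j *: x j - ((\sum_j lN j * gp j) / A) *: \sum_i lP i *: x i.
Proof.
move=> A0 SA.
rewrite (eq_bigr (fun i => \sum_j ((lP i * gp i) * (lN j / A)) *: x j
     - \sum_j ((lN j * gp j) * (lP i / A)) *: x i)); last first.
  move=> i _; rewrite -sumrB; apply: eq_bigr => j _.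
  by rewrite scalerBr !scalerA; congr (_ *: _ - _ *: _); ring.
rewrite sumrB; congr (_ - _).
  rewrite exchange_big /=; apply: eq_bigr => j _.
  by rewrite -scaler_suml -mulr_suml SA; congr (_ *: _); field.
rewrite scaler_sumr; apply: eq_bigr => i _.
by rewrite -scaler_suml -mulr_suml scalerA; congr (_ *: _); field.
Qed.

Lemma double_sum_idR (R : realFieldType) (T : finType)
  (lP lN gp : T -> R) (A : R) :
  A != 0 -> \sum_i lP i * gp i = A ->
  \sum_i \sum_j lP i * lN j * (gp i - gp j) / A =
  \sum_j lN j - ((\sum_j lN j * gp j) / A) * \sum_i lP i.
Proof.
move=> A0 SA.
rewrite (eq_bigr (fun i => \sum_j ((lP i * gp i) * (lN j / A))
     - \sum_j ((lN j * gp j) * (lP i / A)))); last first.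
  by move=> i _; rewrite -sumrB; apply: eq_bigr => j _; ring.
rewrite sumrB; congr (_ - _).
  rewrite exchange_big /=; apply: eq_bigr => j _.
  by rewrite -mulr_suml SA; field.
rewrite mulr_sumr; apply: eq_bigr => i _.
by rewrite -mulr_suml; field.
Qed.

Lemma pair_sumE (Z : nmodType) (T1 T2 : finType) (F : T1 -> T2 -> Z) :
  \sum_(ij : T1 * T2) F ij.1 ij.2 = \sum_i \sum_j F i j.
Proof. by rewrite pair_big. Qed.

Section CutCover.
Variable R : realFieldType.
Variable V : lmodType R.
Variable g : V -> R.
Hypothesis gA : affine g.

Lemma cut_cover W y : convF (fun x => x \in W) y -> 0 <= g y ->
  convF (fun x => x \in cut g W) y.
Proof.
move=> [T [l [p [l0 [l1 [pW ->]]]]]] gy.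
rewrite gA // in gy.
pose lP i := if 0 < g (p i) then l i else 0.
pose lN i := if g (p i) < 0 then l i else 0.
pose lZ i := if g (p i) == 0 then l i else 0.
have lE i : l i = lZ i + lP i + lN i.
  rewrite /lZ /lP /lN; case: (ltrgtP 0 (g (p i))) => _; rewrite ?addr0 ?add0r //.
have lgE i : l i * g (p i) = lP i * g (p i) + lN i * g (p i).
  rewrite /lZ /lP /lN; case: (ltrgtP 0 (g (p i))) => H; rewrite ?mul0r ?addr0 ?add0r //.
  by rewrite -H mulr0.
have lP0 i : 0 <= lP i by rewrite /lP; case: ifP.
have lN0 i : 0 <= lN i by rewrite /lN; case: ifP.
have lZ0 i : 0 <= lZ i by rewrite /lZ; case: ifP.
have lPg i : 0 <= lP i * g (p i).
  by rewrite /lP; case: ifP => H; rewrite ?mul0r // mulr_ge0 // ltW.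
have lNg i : lN i * g (p i) <= 0.
  by rewrite /lN; case: ifP => H; rewrite ?mul0r // mulr_ge0_le0 // ltW.
set A := \sum_i lP i * g (p i).
set B := - \sum_i lN i * g (p i).
have gAB : 0 <= A - B.
  by move: gy; rewrite (eq_bigr _ (fun i _ => lgE i)) big_split /= /A /B opprK.
have A0 : 0 <= A by apply: sumr_ge0 => i _.
have B0 : 0 <= B by rewrite /B oppr_ge0; apply: sumr_le0 => i _.
have [Az|Anz] := eqVneq A 0.
  have lNz i : lN i = 0.
    have Bz : B = 0 by lra.
    have H1 : forall j, predT j -> 0 <= - (lN j * g (p j)).
      by move=> j _; rewrite oppr_ge0.
    have H2 : \sum_j - (lN j * g (p j)) = 0.
      by rewrite sumrN; move: Bz; rewrite /B.
    have := psumr_eq0P H1 H2 (i := i) isT.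
    move/eqP; rewrite oppr_eq0 mulf_eq0 => /orP [/eqP //|].
    by rewrite /lN; case: ifP => // H; rewrite (lt_eqF H).
  apply: convF_drop => // i li.
  rewrite mem_cat mem_filter pW andbT; apply/orP; left.
  rewrite leNgt; apply/negP => H.
  by move: (lNz i); rewrite /lN H => /eqP; rewrite (negbTE li).
have Apos : 0 < A by rewrite lt_def Anz A0.
have SN : \sum_j lN j * g (p j) = - B by rewrite /B opprK.
pose w (t : T + T * T) : R := match t with
  | inl i => lZ i + lP i * (1 - B / A)
  | inr ij => lP ij.1 * lN ij.2 * (g (p ij.1) - g (p ij.2)) / A end.
pose q (t : T + T * T) : V := match t with
  | inl i => p i
  | inr ij => cross g (p ij.1) (p ij.2) end.
have lPpos i : lP i != 0 -> 0 < g (p i) by rewrite /lP; case: ifP => //; rewrite eqxx.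
have lNneg i : lN i != 0 -> g (p i) < 0 by rewrite /lN; case: ifP => //; rewrite eqxx.
have term i j : w (inr (i, j)) *: q (inr (i, j)) =
    (lP i * lN j / A) *: (g (p i) *: p j - g (p j) *: p i).
  rewrite /= /cross scalerA; have [->|] := eqVneq (lP i * lN j) 0.
    by rewrite !mul0r !scale0r.
  rewrite mulf_eq0 negb_or => /andP [/lPpos Pi /lNneg Nj].
  congr (_ *: _); field; apply/andP; split => //; apply: lt0r_neq0; lra.
have -> : \sum_i l i *: p i = \sum_t w t *: q t.
  rewrite big_sumType /= (pair_sumE (fun i j => w (inr (i, j)) *: q (inr (i, j)))).
  rewrite (eq_bigr _ (fun i _ => eq_bigr _ (fun j _ => term i j))).
  rewrite double_sum_id // SN scaler_sumr -sumrB -big_split /=.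
  apply: eq_bigr => i _; rewrite scalerA -scalerBl -scalerDl; congr (_ *: _).
  rewrite lE; field; done.
apply: convF_drop.
- case=> [i|[i j]] /=.
    apply: addr_ge0 => //; apply: mulr_ge0 => //.
    rewrite subr_ge0 ler_pdivrMr // mul1r; lra.
  have [->|] := eqVneq (lP i * lN j) 0; first by rewrite !mul0r.
  rewrite mulf_eq0 negb_or => /andP [/lPpos Pi /lNneg Nj].
  apply: divr_ge0; last by apply: ltW.
  by apply: mulr_ge0; [apply: mulr_ge0|lra].
- rewrite big_sumType /= (pair_sumE (fun i j => w (inr (i, j)))) /=.
  rewrite double_sum_idR // SN mulr_sumr -sumrB -big_split /= -[RHS]l1.
  apply: eq_bigr => i _; rewrite lE; field; done.
- case=> [i|[i j]] /=.
    move=> H; rewrite mem_cat mem_filter pW andbT; apply/orP; left.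
    rewrite leNgt; apply/negP => Hn; move: H.
    by rewrite /lZ /lP (lt_eqF Hn) (lt_gtF Hn) add0r mul0r eqxx.
  have [->|] := eqVneq (lP i * lN j) 0; first by rewrite !mul0r eqxx.
  rewrite mulf_eq0 negb_or => /andP [/lPpos Pi /lNneg Nj] _.
  rewrite mem_cat; apply/orP; right.
  by apply: allpairs_f; rewrite mem_filter ?Pi ?Nj pW.
Qed.
End CutCover.

Section LP.
Variable R : realFieldType.
Variable V : lmodType R.

Lemma lp_gen (gs : list (V -> R)) : (forall g, List.In g gs -> affine g) ->
  forall W : seq V, exists W' : seq V,
  (forall z, z \in W' -> convF (fun x => x \in W) z /\ forall g, List.In g gs -> 0 <= g z) /\
  (forall y, convF (fun x => x \in W) y -> (forall g, List.In g gs -> 0 <= g y) ->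
     convF (fun x => x \in W') y).
Proof.
elim: gs => [|g gs IH] gsA W.
  exists W; split; last by [].
  by move=> z zW; split=> //; apply: convF_pt.
have gA : affine g by apply: gsA; left.
have [W' [H1 H2]] := IH (fun h hi => gsA h (or_intror hi)) (cut g W).
exists W'; split.
  move=> z zW'; have [Hc Hg] := H1 z zW'.
  split.
    by apply: convF_trans Hc => a aW; case: (cut_gen gA aW).
  move=> h [<-|hi]; last by apply: Hg.
  by apply: (convF_affine_ge gA _ Hc) => a aW; case: (cut_gen gA aW).
move=> y Hy Hg; apply: H2.
  by apply: cut_cover => //; apply: Hg; left.
by move=> h hi; apply: Hg; right.
Qed.

Lemma seq_argmax (F : V -> R) (W : seq V) : W != [::] ->
  exists2 u, u \in W & forall z, z \in W -> F z <= F u.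
Proof.
elim: W => [//|a W IH] _.
have [->|Wn] := eqVneq W [::].
  by exists a; rewrite ?mem_head // => z; rewrite inE => /eqP ->.
have [u uW Hu] := IH Wn.
have [Fa|Fa] := lerP (F u) (F a).
  exists a; first by rewrite mem_head.
  move=> z; rewrite inE => /orP [/eqP ->//|/Hu]; move=> H; apply: le_trans H Fa.
exists u; first by rewrite inE uW orbT.
move=> z; rewrite inE => /orP [/eqP ->|/Hu //]; exact: ltW.
Qed.

End LP.


Section Sorting.
Variable R : realFieldType.
Variable n : nat.
Implicit Types (x y u : 'rV[R]_n).

Definition sorted_row y := forall i j : 'I_n, (i <= j)%N -> y 0 j <= y 0 i.
Definition pre y (m : nat) := \sum_(i < n | (i < m)%N) y 0 i.

Lemma pmxE y (s : 'S_n) i : (y *m perm_mx s) 0 i = y 0 (s^-1 i)%g.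
Proof. by rewrite -[s]invgK -col_permE mxE invgK. Qed.

Let geR := fun a b : R => b <= a.
Lemma geR_total : total geR. Proof. by move=> a b; rewrite /geR le_total. Qed.
Lemma geR_trans : transitive geR. Proof. by move=> a b c; rewrite /geR => H1 H2; apply: le_trans H2 H1. Qed.
Lemma geR_anti : antisymmetric geR. Proof. by move=> a b; rewrite /geR => H; apply: le_anti; rewrite andbC. Qed.

Lemma sortdesc_perm y (s : 'S_n) : sortdesc (y *m perm_mx s) = sortdesc y.
Proof.
rewrite /sortdesc; apply/perm_sortP; [exact: geR_total|exact: geR_trans|exact: geR_anti|].
have -> : [seq (y *m perm_mx s) 0 i | i <- enum 'I_n] =
          [seq y 0 i | i <- [seq (s^-1)%g i | i <- enum 'I_n]].
  by rewrite -[in RHS]map_comp; apply: eq_map => i /=; rewrite pmxE.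
apply: perm_map; apply: uniq_perm.
- by rewrite map_inj_uniq ?enum_uniq //; apply: perm_inj.
- by apply: enum_uniq.
- move=> i; rewrite mem_enum inE; apply/mapP; exists (s i); first by rewrite mem_enum.
  by rewrite permK.
Qed.

Lemma sorted_sortdesc y : sorted_row y -> sortdesc y = [seq y 0 i | i <- enum 'I_n].
Proof.
move=> Hy; rewrite /sortdesc sorted_sort //; first exact: geR_trans.
rewrite sorted_map.
have : sorted (relpre val leq) (enum 'I_n) by rewrite -sorted_map val_enum_ord iota_sorted.
by apply: sub_sorted => i j /= H; apply: Hy.
Qed.

Lemma sort_exists y : exists s : 'S_n, sorted_row (y *m perm_mx s).
Proof.
set L := [seq y 0 i | i <- enum 'I_n].
have sL : size L == n by rewrite size_map size_enum_ord.
pose t := Tuple sL.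
have pe : perm_eq (sort geR L) t by rewrite /= perm_sort.
have [p Hp] := tuple_permP pe.
have St : sorted geR (sort geR L) by apply: sort_sorted; exact: geR_total.
have nthE (i : 'I_n) : nth 0 (sort geR L) i = y 0 (p i).
  rewrite Hp (nth_map i) ?size_enum_ord // nth_ord_enum.
  rewrite (tnth_nth 0) /= (nth_map i) ?size_enum_ord //.
  by rewrite nth_ord_enum.
exists p^-1%g => i j ij; rewrite !pmxE !invgK -!nthE.
apply: (sorted_leq_nth geR_trans _ _ St) => //.
- by move=> a; rewrite /geR.
- by rewrite inE size_sort size_map size_enum_ord.
- by rewrite inE size_sort size_map size_enum_ord.
Qed.

Lemma xbr_sorted y (i : 'I_n) : sorted_row y -> xbr y i = y 0 i.
Proof.
move=> Hy; rewrite /xbr sorted_sortdesc // (nth_map i) ?size_enum_ord //.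
by rewrite nth_ord_enum.
Qed.

Lemma topsum_sorted y j : sorted_row y -> (j <= n)%N -> topsum y j = pre y j.
Proof.
move=> Hy jn; rewrite /topsum /pre (big_ord_widen _ _ jn).
by apply: eq_bigr => i _; rewrite xbr_sorted.
Qed.

Lemma topsum_perm y (s : 'S_n) j : topsum (y *m perm_mx s) j = topsum y j.
Proof. by rewrite /topsum /xbr sortdesc_perm. Qed.

End Sorting.


Section Rado.
Variable R : realFieldType.
Variable n : nat.
Implicit Types (x y u z : 'rV[R]_n).

Lemma pre_add y z m : pre (y + z) m = pre y m + pre z m.
Proof. by rewrite /pre -big_split; apply: eq_bigr => i _; rewrite mxE. Qed.
Lemma pre_sub y z m : pre (y - z) m = pre y m - pre z m.
Proof. by rewrite /pre -sumrB; apply: eq_bigr => i _; rewrite !mxE. Qed.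
Lemma pre_scale c y m : pre (c *: y) m = c * pre y m.
Proof. by rewrite /pre mulr_sumr; apply: eq_bigr => i _; rewrite mxE. Qed.
Lemma pre_delta (k : 'I_n) m : pre (delta_mx 0 k : 'rV[R]_n) m = (k < m)%:R.
Proof.
rewrite /pre big_mkcond /= (bigD1 k) //= big1 => [|i ik]; rewrite !mxE eqxx /=.
  by rewrite eqxx addr0; case: ifP.
by rewrite (negbTE ik); case: ifP.
Qed.
Lemma pre_n y : pre y n = \sum_i y 0 i.
Proof. by rewrite /pre; apply: eq_bigl => i; rewrite ltn_ord. Qed.

Lemma split3m (F : 'I_n -> R) (j : 'I_n) m : (j < m)%N ->
  \sum_(i : 'I_n | (i < m)%N) F i = \sum_(i : 'I_n | (i < j)%N) F i + F j + \sum_(i : 'I_n | (j < i < m)%N) F i.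
Proof.
move=> jm; rewrite (bigID (fun i : 'I_n => (i < j)%N)) /= -addrA; congr (_ + _).
  by apply: eq_bigl => i; apply/idP/idP; lia.
rewrite (bigD1 j) /=; last by apply/andP; split=> //; rewrite ltnn.
congr (_ + _); apply: eq_bigl => i; rewrite -(inj_eq val_inj) /=.
apply/idP/idP; lia.
Qed.

Variable x : 'rV[R]_n.
Hypothesis xs : sorted_row x.

Definition Dset u := [set i | u 0 i != x 0 i].

Lemma rado_base u : Dset u = set0 -> convF (fun z => exists s : 'S_n, z = u *m perm_mx s) x.
Proof.
move=> D0; have ux : u = x.
  apply/rowP => i; apply/eqP; apply: contraT => H.
  have : i \in Dset u by rewrite inE.
  by rewrite D0 inE.
by rewrite -{1}ux; apply: convF_pt; exists 1%g; rewrite perm_mx1 mulmx1.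
Qed.


Lemma rado u : (forall j, (j < n)%N -> pre x j <= pre u j) -> pre x n = pre u n ->
  convF (fun z => exists s : 'S_n, z = u *m perm_mx s) x.
Proof.
suff H : forall m u, (#|Dset u| <= m)%N -> (forall j, (j < n)%N -> pre x j <= pre u j) ->
   pre x n = pre u n -> convF (fun z => exists s : 'S_n, z = u *m perm_mx s) x.
  by apply: H.
elim=> [|m IH] {}u Dm Hpre Hn.
  by apply: rado_base; apply/eqP; rewrite -cards_eq0 -leqn0.
have [D0|[i0 i0D]] := set_0Vmem (Dset u); first by apply: rado_base.
have [j0 Hj0] : exists j0, x 0 j0 < u 0 j0.
  apply/existsP; apply: contraT; rewrite negb_exists => /forallP Hall.
  have ule (i : 'I_n) : u 0 i <= x 0 i by rewrite leNgt; apply: Hall.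
  have : \sum_i u 0 i < \sum_i x 0 i.
    rewrite (bigD1 i0) //= [X in _ < X](bigD1 i0) //=.
    apply: ltr_leD; last by apply: ler_sum => i _; apply: ule.
    by rewrite lt_def ule andbT; move: i0D; rewrite inE eq_sym.
  by rewrite -!pre_n Hn ltxx.
case: (@arg_maxnP _ j0 (fun i => x 0 i < u 0 i) (fun i : 'I_n => val i) Hj0) => j Hj jmax.
have after (i : 'I_n) : (j < i)%N -> u 0 i <= x 0 i.
  move=> ji; rewrite leNgt; apply/negP => H; have /= := jmax i H; lia.
have [k0 Hk0] : exists k0 : 'I_n, (j < k0)%N && (u 0 k0 < x 0 k0).
  apply/existsP; apply: contraT; rewrite negb_exists => /forallP Hall.
  have eqa (i : 'I_n) : (j < i)%N -> u 0 i = x 0 i.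
    move=> ji; apply: le_anti; rewrite after //=; rewrite leNgt.
    by move: (Hall i); rewrite ji.
  have := Hpre j (ltn_ord j).
  have Hs : \sum_i (u 0 i - x 0 i) = 0 by rewrite sumrB -!pre_n Hn subrr.
  have : \sum_(i : 'I_n | (i < n)%N) (u 0 i - x 0 i) = 0.
    by rewrite -[RHS]Hs; apply: eq_bigl => i; rewrite ltn_ord.
  rewrite (split3m _ (ltn_ord j)) [X in _ + _ + X = _]big1 ?addr0; last first.
    by move=> i /andP [ji _]; rewrite eqa // subrr.
  rewrite sumrB -/(pre u j) -/(pre x j) => H1 H2.
  by move: Hj; lra.
case: (@arg_minnP _ k0 (fun i : 'I_n => (j < i)%N && (u 0 i < x 0 i)) (fun i : 'I_n => val i) Hk0) => k /andP [jk Hk] kmin.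
have mid (i : 'I_n) : (j < i)%N -> (i < k)%N -> u 0 i = x 0 i.
  move=> ji ik; apply: le_anti; rewrite after //=; rewrite leNgt; apply/negP => H.
  have := kmin i; rewrite ji H => /(_ isT) /= ?; lia.
have xjk : x 0 k <= x 0 j by apply: xs; apply: ltnW.
have jk_neq : j != k by rewrite -(inj_eq val_inj) /= neq_ltn jk.
set d := Num.min (u 0 j - x 0 j) (x 0 k - u 0 k).
have d0 : 0 < d by rewrite lt_min !subr_gt0 Hj Hk.
have d1 : d <= u 0 j - x 0 j by rewrite ge_min lexx.
have d2 : d <= x 0 k - u 0 k by rewrite ge_min lexx orbT.
set dd := u 0 j - u 0 k.
have dd0 : 0 < dd by rewrite /dd; lra.
set lam := 1 - d / dd.
have lam0 : 0 <= lam by rewrite /lam subr_ge0 ler_pdivrMr // mul1r /dd; lra.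
have lam1 : 0 <= 1 - lam by rewrite /lam opprB addrC subrK divr_ge0 // ltW.
set u' := u + d *: (delta_mx 0 k - delta_mx 0 j).
have u'E (i : 'I_n) : u' 0 i = u 0 i + d * ((i == k)%:R - (i == j)%:R).
  by rewrite /u' !mxE.
have u'P : u' = lam *: u + (1 - lam) *: (u *m perm_mx (tperm j k)).
  apply/rowP => i; move: (pmxE u (tperm j k) i); rewrite tpermV.
  move: (u *m perm_mx (tperm j k)) => w wE.
  rewrite u'E !mxE wE.
  have [->|ij] := eqVneq i j.
    rewrite tpermL ?eqxx (negbTE jk_neq) /lam /dd /=; field; exact: lt0r_neq0 dd0.
  have [Ek|ik] := eqVneq i k.
    subst i.
    rewrite tpermR /lam /dd /=; field; exact: lt0r_neq0 dd0.
  rewrite tpermD 1?eq_sym // ?(negbTE ij) ?(negbTE ik) /= subrr mulr0 addr0; ring.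
have preu' m' : pre u' m' = pre u m' + d * ((k < m')%:R - (j < m')%:R).
  by rewrite /u' pre_add pre_scale pre_sub !pre_delta.
have Dsub : Dset u' \proper Dset u.
  apply/properP; split.
    apply/subsetP => i; rewrite !inE u'E.
    have [->|ij] := eqVneq i j; first by move=> _; rewrite neq_lt Hj orbT.
    have [->|ik] := eqVneq i k; first by move=> _; rewrite neq_lt Hk.
    by rewrite ?(negbTE ij) ?(negbTE ik) /= subrr mulr0 addr0.
  have [dE|dE] := eqVneq d (u 0 j - x 0 j).
    exists j; first by rewrite inE neq_lt Hj orbT.
    rewrite inE u'E eqxx (negbTE jk_neq) dE negbK /=; apply/eqP; ring.
  have dE' : d = x 0 k - u 0 k.
    by move: dE; rewrite /d; case: (lerP (u 0 j - x 0 j) (x 0 k - u 0 k)); rewrite ?eqxx.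
  exists k; first by rewrite inE neq_lt Hk.
  have kj : (k == j) = false by rewrite eq_sym (negbTE jk_neq).
  rewrite inE u'E eqxx kj dE' negbK /=; apply/eqP; ring.
have IHu' := IH u'.
have Cu' : convF (fun z => exists s : 'S_n, z = u' *m perm_mx s) x.
  apply: IHu'.
  - by rewrite -ltnS; apply: leq_trans (proper_card Dsub) Dm.
  - move=> m' m'n; rewrite preu'.
    case: (boolP ((j < m') && (m' <= k))%N) => [/andP [jm mk]|Hm].
      have ltk : (k < m')%N = false by rewrite ltnNge mk.
      rewrite ltk jm /= sub0r mulrN1.
      have : pre u m' - pre x m' = pre u j - pre x j + (u 0 j - x 0 j).
        rewrite -!pre_sub /pre (split3m _ jm) [X in _ + _ + X = _]big1 ?addr0 ?mxE //.
        move=> i /andP [ji im]; rewrite !mxE mid ?subrr //; exact: leq_trans im mk.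
      have := Hpre j (ltn_ord j); lra.
    have -> : (k < m')%N = (j < m')%N.
      apply/idP/idP => H; first exact: ltn_trans jk H.
      by move: Hm; rewrite H /= -ltnNge.
    by rewrite subrr mulr0 addr0; apply: Hpre.
  - by rewrite preu' !ltn_ord subrr mulr0 addr0.
apply: convF_trans Cu' => a [s ->].
rewrite u'P mulmxDl -!scalemxAl -mulmxA -perm_mxM.
have := convF_drop (A := fun z => exists s : 'S_n, z = u *m perm_mx s)
   (l := fun b : bool => if b then lam else 1 - lam)
   (p := fun b : bool => if b then u *m perm_mx s else u *m perm_mx (tperm j k * s)).
rewrite !big_bool /=; apply.
- by case.
- by rewrite subrKC.
- by case=> _; [exists s|exists (tperm j k * s)%g].
Qed.

End Rado.


Section Aff.
Variable R : realFieldType.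
Variable V : lmodType R.

Lemma affine_const (c : R) : affine (fun _ : V => c).
Proof. by move=> T l p l1; rewrite -mulr_suml l1 mul1r. Qed.

Lemma affine_sub (f h : V -> R) : affine f -> affine h -> affine (fun y => f y - h y).
Proof.
move=> fA hA T l p l1; rewrite fA // hA // -sumrB.
by apply: eq_bigr => i _; rewrite mulrBr.
Qed.

Lemma affine_big (C : finType) (P : pred C) (f : C -> V -> R) :
  (forall c, affine (f c)) -> affine (fun y => \sum_(c | P c) f c y).
Proof.
move=> fA T l p l1.
rewrite (eq_bigr (fun c => \sum_i l i * f c (p i))); last by move=> c _; rewrite fA.
by rewrite exchange_big /=; apply: eq_bigr => i _; rewrite mulr_sumr.
Qed.

Lemma In_map (A B : Type) (f : A -> B) (s : seq A) b :
  List.In b (map f s) -> exists a, b = f a.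
Proof. by elim: s => //= a s IH [<-|/IH]; [exists a|]. Qed.

Lemma In_mem (A : eqType) (s : seq A) a : a \in s -> List.In a s.
Proof. by elim: s => //= c s IH; rewrite inE => /orP [/eqP ->|/IH]; [left|right]. Qed.

Lemma In_map_f (A B : Type) (f : A -> B) (s : seq A) a :
  List.In a s -> List.In (f a) (map f s).
Proof. by elim: s => //= c s IH [->|/IH]; [left|right]. Qed.

Lemma lp_fin (C : finType) (gs : C -> V -> R) : (forall c, affine (gs c)) ->
  forall W : seq V, exists W' : seq V,
  (forall z, z \in W' -> convF (fun x => x \in W) z /\ forall c, 0 <= gs c z) /\
  (forall y, convF (fun x => x \in W) y -> (forall c, 0 <= gs c y) ->
     convF (fun x => x \in W') y).
Proof.
move=> gA W.
have gsA : forall g, List.In g [seq gs c | c <- enum C] -> affine g.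
  by move=> g hg; have [c ->] := In_map hg.
have [W' [H1 H2]] := lp_gen gsA W.
have inG c : List.In (gs c) [seq gs c | c <- enum C].
  by apply: In_map_f; apply: In_mem; rewrite mem_enum.
exists W'; split.
  move=> z zW; have [Hc Hg] := H1 z zW; split=> // c; apply: Hg; apply: inG.
move=> y Hy Hc; apply: H2 => // g hg; have [c ->] := In_map hg; apply: Hc.
Qed.

Lemma convF_nil (y : V) : ~ convF (fun z => z \in [::]) y.
Proof.
move=> [T [l [p [_ [l1 [pW _]]]]]].
have : \sum_i l i = 0 by apply: big1 => i _; have := pW i.
by rewrite l1 => /eqP; rewrite oner_eq0.
Qed.

Variable W : lmodType R.
Lemma convF_map (f : V -> W) (A : V -> Prop) y :
  (forall (T : finType) (l : T -> R) (p : T -> V), \sum_i l i = 1 ->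
     f (\sum_i l i *: p i) = \sum_i l i *: f (p i)) ->
  convF A y -> convF (fun w => exists a, A a /\ w = f a) (f y).
Proof.
move=> fA [T [l [p [l0 [l1 [pA ->]]]]]].
exists T, l, (fun i => f (p i)); do !split=> //; first by move=> i; exists (p i).
by rewrite fA.
Qed.
End Aff.

Section Rows.
Variable R : realFieldType.
Variable n : nat.

Lemma affine_coord (i : 'I_n) : affine (fun y : 'rV[R]_n => y 0 i).
Proof. by move=> T l p l1; rewrite summxE; apply: eq_bigr => t _; rewrite mxE. Qed.

Lemma affine_pre m : affine (fun y : 'rV[R]_n => pre y m).
Proof. exact: (@affine_big R _ 'I_n (fun i : 'I_n => (i < m)%N) (fun i (y : 'rV[R]_n) => y 0 i) (fun i => affine_coord i)). Qed.

Lemma pre_succ (y : 'rV[R]_n) (i : 'I_n) : pre y i.+1 = pre y i + y 0 i.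
Proof.
rewrite /pre (split3m _ (ltnSn i)) [X in _ + _ + X = _]big_pred0 ?addr0 // => k.
by apply/negP => /andP [H1 H2]; move: H2; rewrite ltnS leqNgt H1.
Qed.

Lemma pt_affine (t : R) (T : finType) (l : T -> R) (p : T -> 'rV[R]_n) :
  \sum_i l i = 1 -> pt (\sum_i l i *: p i) t = \sum_i l i *: pt (p i) t.
Proof.
move=> l1; apply/rowP => i; rewrite summxE.
case: (splitP i) => [j eij|j eij].
  have -> : i = lshift 1 j by apply: val_inj.
  rewrite /pt row_mxEl summxE; apply: eq_bigr => k _.
  by rewrite [LHS]mxE [RHS]mxE row_mxEl.
have -> : i = rshift n j by apply: val_inj.
rewrite /pt row_mxEr mxE -[LHS]mul1r -l1 mulr_suml; apply: eq_bigr => k _.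
by rewrite [RHS]mxE row_mxEr mxE.
Qed.

Lemma pm_affine (M : 'M[R]_n) (T : finType) (l : T -> R) (p : T -> 'rV[R]_n) :
  (\sum_i l i *: p i) *m M = \sum_i l i *: (p i *m M).
Proof. by rewrite mulmx_suml; apply: eq_bigr => i _; rewrite scalemxAl. Qed.

End Rows.


Section Main.
Variable R : realFieldType.
Variable n : nat.

Lemma exists_max (P : 'rV[R]_n -> Prop) (xs : 'rV[R]_n) :
  polytope P -> perm_invariant P -> P xs -> sorted_row xs ->
  exists u, maj_maximal P u /\ sorted_row u /\
    (forall m, (m <= n)%N -> pre xs m <= pre u m) /\ pre u n = pre xs n.
Proof.
move=> [k [v Hv]] Pinv Pxs xsS.
set W := [seq v i | i <- enum 'I_k].
have PW y : P y <-> convF (fun z => z \in W) y.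
  rewrite Hv conv_convF; split; apply: convF_mono => a.
    by move=> [i ->]; apply: map_f; rewrite mem_enum.
  by move/mapP => [i _ ->]; exists i.
pose C := ('I_n * 'I_n + 'I_n.+1 + unit)%type.
pose gs (c : C) : 'rV[R]_n -> R := match c with
  | inl (inl ij) => if (ij.1 <= ij.2)%N then (fun y => y 0 ij.1 - y 0 ij.2) else (fun _ => 0)
  | inl (inr m) => fun y => pre y m - pre xs m
  | inr _ => fun y => pre xs n - pre y n end.
have gsA c : affine (gs c).
  case: c => [[[i j]|m]|[]] /=.
  - case: ifP => _; last exact: affine_const.
    by apply: affine_sub; apply: affine_coord.
  - by apply: affine_sub; [apply: affine_pre|apply: affine_const].
  - by apply: affine_sub; [apply: affine_const|apply: affine_pre].
have gsE y : (forall c, 0 <= gs c y) <->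
    sorted_row y /\ (forall m, (m <= n)%N -> pre xs m <= pre y m) /\ pre y n = pre xs n.
  split.
    move=> H.
    have ym m : (m <= n)%N -> pre xs m <= pre y m.
      move=> mn; have hm : (m < n.+1)%N by rewrite ltnS.
      by have := H (inl (inr (Ordinal hm))); rewrite /= subr_ge0.
    split; [|split=> //].
      by move=> i j ij; have := H (inl (inl (i, j))); rewrite /= ij subr_ge0.
    apply: le_anti; rewrite ym // andbT.
    by have := H (inr tt); rewrite /= subr_ge0.
  move=> [yS [ym yn]] [[[i j]|m]|[]] /=.
  - by case: ifP => ij //; rewrite subr_ge0; apply: yS.
  - by rewrite subr_ge0; apply: ym; rewrite -ltnS; apply: ltn_ord.
  - by rewrite yn subrr.
have [W' [H1 H2]] := lp_fin gsA W.
pose F (y : 'rV[R]_n) := \sum_(m : 'I_n.+1) pre y m.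
have FA : affine F.
  exact: (@affine_big R _ 'I_n.+1 predT (fun m y => pre y m) (fun m => affine_pre m)).
have xsK : convF (fun z => z \in W') xs.
  apply: H2; first by apply/PW.
  by apply/gsE; split=> //; split=> // m _.
have W'n : W' != [::].
  by apply/eqP => W0; rewrite W0 in xsK; apply: convF_nil xsK.
have [u uW' umax] := seq_argmax F W'n.
have Fmax y : convF (fun z => z \in W') y -> F y <= F u.
  by apply: convF_affine_le.
have [uW uc] := H1 u uW'.
have [uS [um un]] := (gsE u).1 uc.
exists u; split; last by [].
split; first by apply/PW.
move=> [w [Pw [[wu1 wu2] wne]]].
have [s wsS] := sort_exists w.
set ws := w *m perm_mx s.
have Pws : P ws by apply: Pinv.
have preE m : (m <= n)%N -> pre ws m = topsum w m.
  by move=> mn; rewrite -(topsum_perm w s) topsum_sorted.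
have preuE m : (m <= n)%N -> pre u m = topsum u m.
  by move=> mn; rewrite topsum_sorted.
have le_m m : (m <= n)%N -> pre u m <= pre ws m.
  move=> mn; rewrite preE // preuE //.
  move: mn; rewrite leq_eqVlt => /orP [/eqP ->|mn]; first by rewrite wu2.
  by apply: wu1.
have wsK : convF (fun z => z \in W') ws.
  apply: H2; first by apply/PW.
  apply/gsE; split=> //; split.
    by move=> m mn; apply: le_trans (um m mn) (le_m m mn).
  by rewrite preE // wu2 -preuE.
have Fle := Fmax ws wsK.
have eqm (m : 'I_n.+1) : pre ws m = pre u m.
  have H0 : \sum_(m : 'I_n.+1) (pre ws m - pre u m) = 0.
    apply: le_anti; apply/andP; split.
      by rewrite sumrB subr_le0.
    by apply: sumr_ge0 => m' _; rewrite subr_ge0 le_m // -ltnS ltn_ord.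
  have Hnn : forall m' : 'I_n.+1, predT m' -> 0 <= pre ws m' - pre u m'.
    by move=> m' _; rewrite subr_ge0 le_m // -ltnS ltn_ord.
  have := psumr_eq0P Hnn H0 (i := m) isT.
  by move/eqP; rewrite subr_eq0 => /eqP.
have wsu : ws = u.
  apply/rowP => i.
  have hi : (i.+1 < n.+1)%N by rewrite ltnS.
  have hi' : (i < n.+1)%N by rewrite ltnS ltnW.
  have e1 := eqm (Ordinal hi); have e2 := eqm (Ordinal hi').
  rewrite /= !pre_succ in e1 e2 *.
  by move: e1; rewrite e2 => /addrI.
by apply: wne; rewrite -(sortdesc_perm w s) -/ws wsu.
Qed.

Lemma maj_perm (P : 'rV[R]_n -> Prop) u (s : 'S_n) :
  perm_invariant P -> maj_maximal P u -> maj_maximal P (u *m perm_mx s).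
Proof.
move=> Pinv [Pu Hn]; split; first by apply: Pinv.
move=> [w [Pw [[wu1 wu2] wne]]]; apply: Hn; exists w; split=> //; split.
  split; first by move=> j jn; rewrite -(topsum_perm u s); apply: wu1.
  by rewrite wu2 topsum_perm.
by rewrite -(sortdesc_perm u s).
Qed.

End Main.

Theorem mainTheorem12 (R : realFieldType) (n : nat) (P : 'rV[R]_n -> Prop)
  (phi : 'rV[R]_n -> R) (alpha : R) :
  polytope P -> perm_invariant P -> schur_concave_on P phi ->
  forall z : 'rV[R]_(n + 1),
    conv (episet P phi alpha) z <-> conv (episet (maj_maximal P) phi alpha) z.
Proof.
move=> Ppoly Pinv Pschur z; rewrite !conv_convF; split; last first.
  apply: convF_mono => a [x [t [-> [[Px _] [h1 h2]]]]].
  by exists x, t.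
apply: convF_trans => a [x [t [-> [Px [h1 h2]]]]].
have [s0 xsS] := sort_exists x.
set xs := x *m perm_mx s0.
have Pxs : P xs by apply: Pinv.
have [u [uM [uS [um un]]]] := exists_max Ppoly Pinv Pxs xsS.
have Cu : convF (fun z => exists s : 'S_n, z = u *m perm_mx s) xs.
  apply: (rado xsS).
    by move=> j jn; apply: um; apply: ltnW.
  by rewrite un.
have -> : pt x t = (fun y => pt (y *m perm_mx s0^-1) t) xs.
  by rewrite /= /xs -mulmxA -perm_mxM mulgV perm_mx1 mulmx1.
have fA : forall (T : finType) (l : T -> R) (p : T -> 'rV[R]_n), \sum_i l i = 1 ->
    pt ((\sum_i l i *: p i) *m perm_mx s0^-1) t = \sum_i l i *: pt (p i *m perm_mx s0^-1) t.
  by move=> T l p l1; rewrite pm_affine pt_affine.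
have Cm := convF_map (f := fun y => pt (y *m perm_mx s0^-1) t) fA Cu.
apply: convF_mono Cm => b [y [[s ->] ->]].
exists (u *m perm_mx (s * s0^-1)), t; split.
  by rewrite perm_mxM mulmxA.
have Mus : maj_maximal P (u *m perm_mx (s * s0^-1)) by apply: maj_perm.
split=> //; split=> //.
apply: le_trans h1; apply: Pschur => //; first by case: Mus.
split.
  move=> j jn; rewrite topsum_perm -(topsum_perm x s0) -/xs.
  rewrite (topsum_sorted xsS (ltnW jn)) (topsum_sorted uS (ltnW jn)).
  by apply: um; apply: ltnW.
rewrite topsum_perm -(topsum_perm x s0) -/xs.
by rewrite (topsum_sorted xsS (leqnn n)) (topsum_sorted uS (leqnn n)).
Qed.
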